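(* Let $X$ be a topological vector space and let $\varphi: X\to\overline{\mathbb{R}}$ be continuous and linear. Then $\varphi$ is finite-valued, i.e. $\varphi(x)\in\mathbb{R}$ for all $x\in X$.
   Context: $\overline{\mathbb{R}}=\mathbb{R}\cup\{-\infty,+\infty\}$ with the order topology (a neighborhood base of $+\infty$ is $\{\{y:y>a\}:a\in\mathbb{R}\}$, of $-\infty$ is $\{\{y:y<a\}:a\in\mathbb{R}\}$). Continuity of $\varphi:X\to\overline{\mathbb{R}}$ is ordinary continuity into this space. $\operatorname{epi}\varphi=\{(x,t)\in X\times\mathbb{R}:\varphi(x)\le t\}$, $\operatorname{hypo}\varphi=\{(x,t)\in X\times\mathbb{R}:\varphi(x)\ge t\}$. A function $\varphi:X\to\overline{\mathbb{R}}$ is called linear if $\operatorname{epi}\varphi$ and $\operatorname{hypo}\varphi$ are convex sets and $\varphi(0)=0$. *)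

(* Defs.v *)
From Stdlib Require Import Reals.
Open Scope R_scope.

Inductive Rbar : Type :=
  | Finite : R -> Rbar
  | p_infty : Rbar
  | m_infty : Rbar.

Definition Rbar_le (x y : Rbar) : Prop :=
  match x, y with
  | m_infty, _ => True
  | _, p_infty => True
  | Finite a, Finite b => a <= b
  | _, _ => False
  end.

(** Open sets of Rbar for the order topology: every point has a basic
    neighbourhood inside the set (intervals around finite points,
    {y > a} around +oo, {y < a} around -oo). *)
Definition Rbar_open (U : Rbar -> Prop) : Prop :=
  forall y, U y ->
    match y with
    | Finite r => exists eps, 0 < eps /\
                   forall s, Rabs (s - r) < eps -> U (Finite s)
    | p_infty => exists a, U p_infty /\ forall s, a < s -> U (Finite s)
    | m_infty => exists a, U m_infty /\ forall s, s < a -> U (Finite s)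
    end.

Definition R_open (U : R -> Prop) : Prop :=
  forall r, U r -> exists eps, 0 < eps /\ forall s, Rabs (s - r) < eps -> U s.

(** Real topological vector spaces (no separation axiom required). *)
Record TVS : Type := {
  carrier :> Type;
  vzero : carrier;
  vadd : carrier -> carrier -> carrier;
  vopp : carrier -> carrier;
  vscal : R -> carrier -> carrier;
  vadd_assoc : forall x y z, vadd x (vadd y z) = vadd (vadd x y) z;
  vadd_comm : forall x y, vadd x y = vadd y x;
  vadd_0 : forall x, vadd x vzero = x;
  vadd_opp : forall x, vadd x (vopp x) = vzero;
  vscal_assoc : forall a b x, vscal a (vscal b x) = vscal (a * b) x;
  vscal_1 : forall x, vscal 1 x = x;
  vscal_distr_v : forall a x y, vscal a (vadd x y) = vadd (vscal a x) (vscal a y);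
  vscal_distr_s : forall a b x, vscal (a + b) x = vadd (vscal a x) (vscal b x);
  vopen : (carrier -> Prop) -> Prop;
  vopen_full : vopen (fun _ => True);
  vopen_empty : vopen (fun _ => False);
  vopen_union : forall (I : Type) (F : I -> carrier -> Prop),
      (forall i, vopen (F i)) -> vopen (fun x => exists i, F i x);
  vopen_inter : forall U V, vopen U -> vopen V -> vopen (fun x => U x /\ V x);
  vadd_cont : forall W, vopen W -> forall x y, W (vadd x y) ->
      exists U V, vopen U /\ vopen V /\ U x /\ V y /\
        forall x' y', U x' -> V y' -> W (vadd x' y');
  vscal_cont : forall W, vopen W -> forall a x, W (vscal a x) ->
      exists (A : R -> Prop) U, R_open A /\ vopen U /\ A a /\ U x /\
        forall a' x', A a' -> U x' -> W (vscal a' x')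
}.

Definition continuous_Rbar (X : TVS) (phi : X -> Rbar) : Prop :=
  forall U, Rbar_open U -> vopen X (fun x => U (phi x)).

Definition convex_XR (X : TVS) (S : X -> R -> Prop) : Prop :=
  forall x1 t1 x2 t2 l, S x1 t1 -> S x2 t2 -> 0 <= l <= 1 ->
    S (vadd X (vscal X l x1) (vscal X (1 - l) x2)) (l * t1 + (1 - l) * t2).

Definition epi (X : TVS) (phi : X -> Rbar) : X -> R -> Prop :=
  fun x t => Rbar_le (phi x) (Finite t).

Definition hypo (X : TVS) (phi : X -> Rbar) : X -> R -> Prop :=
  fun x t => Rbar_le (Finite t) (phi x).

Definition linear_Rbar (X : TVS) (phi : X -> Rbar) : Prop :=
  convex_XR X (epi X phi) /\ convex_XR X (hypo X phi) /\ phi (vzero X) = Finite 0.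

(* Main.v *)
Require Import Defs.
From Stdlib Require Import Reals Lra.
Open Scope R_scope.

Lemma dbl0 (X : TVS) (y : X) : y = vadd X y y -> y = vzero X.
Proof.
  intro H. rewrite <- (vadd_opp X y). rewrite H at 2.
  rewrite <- vadd_assoc, vadd_opp, vadd_0. reflexivity.
Qed.

Lemma scal_zero (X : TVS) (c : R) : vscal X c (vzero X) = vzero X.
Proof. apply dbl0. rewrite <- vscal_distr_v, vadd_0. reflexivity. Qed.

Lemma zero_scal (X : TVS) (x : X) : vscal X 0 x = vzero X.
Proof. apply dbl0. rewrite <- vscal_distr_s. f_equal. lra. Qed.

Lemma pt (X : TVS) (x : X) (e : R) :
  vadd X (vscal X e x) (vscal X (1 - e) (vzero X)) = vscal X e x.
Proof. rewrite scal_zero, vadd_0. reflexivity. Qed.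

Theorem mainTheorem11 (X : TVS) (phi : X -> Rbar) :
  continuous_Rbar X phi -> linear_Rbar X phi ->
  forall x : X, exists r : R, phi x = Finite r.
Proof.
  intros Hc [He [Hh H0]] x.
  set (U := fun y : Rbar => match y with Finite s => Rabs s < 1 | _ => False end).
  assert (HU : Rbar_open U).
  { intros [r| |] Hr; simpl in Hr; try contradiction.
    exists (1 - Rabs r). split; [lra|]. intros s Hs. simpl.
    pose proof (Rabs_triang_inv s r). lra. }
  pose proof (Hc U HU) as HV.
  destruct (vscal_cont X _ HV 0 x) as [A [U' [HA [_ [HA0 [HU' Hall]]]]]].
  { rewrite zero_scal, H0. simpl. rewrite Rabs_R0. lra. }
  destruct (HA 0 HA0) as [eps [Heps HA']].
  set (e := Rmin (eps/2) (1/2)).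
  assert (He0 : 0 < e) by (unfold e; apply Rmin_glb_lt; lra).
  assert (He1 : e <= 1/2) by (unfold e; apply Rmin_r).
  assert (Hee : e <= eps/2) by (unfold e; apply Rmin_l).
  assert (HeA : A e) by (apply HA'; rewrite Rminus_0_r, Rabs_right; lra).
  pose proof (Hall e x HeA HU') as Hin. simpl in Hin.
  destruct (phi (vscal X e x)) as [s| |] eqn:Es; simpl in Hin; try contradiction.
  destruct (phi x) as [r| |] eqn:Ex.
  - exists r; reflexivity.
  - exfalso.
    assert (Hhx : Defs.hypo X phi x (2 / e)) by (unfold Defs.hypo; rewrite Ex; exact I).
    assert (Hh0 : Defs.hypo X phi (vzero X) 0) by (unfold Defs.hypo; rewrite H0; simpl; lra).
    pose proof (Hh _ _ _ _ e Hhx Hh0 ltac:(lra)) as Hc'.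
    unfold Defs.hypo in Hc'. rewrite pt, Es in Hc'. simpl in Hc'.
    replace (e * (2 / e) + (1 - e) * 0) with 2 in Hc' by (field; lra).
    pose proof (Rle_abs s). lra.
  - exfalso.
    assert (Hhx : Defs.epi X phi x (-2 / e)) by (unfold Defs.epi; rewrite Ex; exact I).
    assert (Hh0 : Defs.epi X phi (vzero X) 0) by (unfold Defs.epi; rewrite H0; simpl; lra).
    pose proof (He _ _ _ _ e Hhx Hh0 ltac:(lra)) as Hc'.
    unfold Defs.epi in Hc'. rewrite pt, Es in Hc'. simpl in Hc'.
    replace (e * (-2 / e) + (1 - e) * 0) with (-2) in Hc' by (field; lra).
    pose proof (Rabs_Ropp s). pose proof (Rle_abs (- s)). lra.
Qed.
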